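(* Let $X\in\mathbb{R}^{m\times n}$, $\lambda>0$, and let $f:\mathbb{R}^{m\times n}\to\mathbb{R}$ be an arbitrary function. Consider the original R-PCA problem $$\min_{A,E\in\mathbb{R}^{m\times n}} \operatorname{rank}(A)+\lambda f(E)\quad\text{s.t.}\quad X=A+E, \tag{P}$$ and the original R-LRR problem $$\min_{Z\in\mathbb{R}^{n\times n},\,E\in\mathbb{R}^{m\times n}} \operatorname{rank}(Z)+\lambda f(E)\quad\text{s.t.}\quad X-E=(X-E)Z. \tag{Q}$$ (i) Let $(A^*,E^* )$ be any minimizer of (P) and let $A^*=U_{A^*}\Sigma_{A^*}V_{A^*}^T$ be its skinny SVD. Then for every matrix $S\in\mathbb{R}^{n\times \operatorname{rank}(A^* )}$ with $V_{A^*}^TS=0$, the pair $\big((A^* )^\dagger A^*+SV_{A^*}^T,\;E^*\big)$ is an optimal solution of (Q). (ii) Conversely, if $(Z^*,E^* )$ is an optimal solution of (Q), then $(X-E^*,E^* )$ is a minimizer of (P).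
   Context: $M^\dagger$ denotes the Moore–Penrose pseudo-inverse of $M$. The skinny SVD of a matrix $A$ of rank $r$ is $A=U_A\Sigma_AV_A^T$ with $U_A,V_A$ having $r$ orthonormal columns and $\Sigma_A$ an $r\times r$ diagonal matrix with positive diagonal entries. *)

(* Defs.v *)
(* real matrices over an arbitrary real closed field R. *)
From HB Require Import structures.
From mathcomp Require Import all_boot all_order all_algebra.
Set Implicit Arguments. Unset Strict Implicit. Unset Printing Implicit Defensive.
Import Order.TTheory GRing.Theory Num.Theory.
Local Open Scope ring_scope.

(* B is the Moore--Penrose pseudo-inverse of A (the four Penrose conditions;
   such a B is unique). *)
Definition is_pinv (R : rcfType) (m n : nat) (A : 'M[R]_(m, n)) (B : 'M[R]_(n, m)) :=
  [/\ A *m B *m A = A, B *m A *m B = B,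
      (A *m B)^T = A *m B & (B *m A)^T = B *m A].

Definition skinny_svd (R : rcfType) (m n : nat) (A : 'M[R]_(m, n))
  (U : 'M[R]_(m, \rank A)) (Sig : 'M[R]_(\rank A)) (V : 'M[R]_(n, \rank A)) :=
  [/\ A = U *m Sig *m V^T, U^T *m U = 1%:M, V^T *m V = 1%:M,
      (forall i j, i != j -> Sig i j = 0) & (forall i, 0 < Sig i i)].

Definition minP (R : rcfType) (m n : nat) (X : 'M[R]_(m, n)) (lam : R)
  (f : 'M[R]_(m, n) -> R) (A E : 'M[R]_(m, n)) :=
  X = A + E /\
  forall A' E' : 'M[R]_(m, n), X = A' + E' ->
    (\rank A)%:R + lam * f E <= (\rank A')%:R + lam * f E'.

Definition minQ (R : rcfType) (m n : nat) (X : 'M[R]_(m, n)) (lam : R)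
  (f : 'M[R]_(m, n) -> R) (Z : 'M[R]_n) (E : 'M[R]_(m, n)) :=
  X - E = (X - E) *m Z /\
  forall (Z' : 'M[R]_n) (E' : 'M[R]_(m, n)), X - E' = (X - E') *m Z' ->
    (\rank Z)%:R + lam * f E <= (\rank Z')%:R + lam * f E'.

(* Main.v *)
Require Import Defs.
From HB Require Import structures.
From mathcomp Require Import all_boot all_order all_algebra.
Import Order.TTheory GRing.Theory Num.Theory.
Local Open Scope ring_scope.

Lemma exists_proj (R : rcfType) (m n : nat) (A : 'M[R]_(m, n)) :
  exists Z : 'M[R]_n, A *m Z = A /\ (\rank Z <= \rank A)%N.
Proof.
have hP := mulmxKpV (submx_refl A^T).
move: hP; move: (pinvmx A^T) => P hP.
exists (P^T *m A); split.
  apply: trmx_inj; rewrite !trmx_mul trmxK.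
  exact: hP.
exact: mxrankM_maxr.
Qed.

Lemma feas_rank (R : rcfType) (m n : nat) (B : 'M[R]_(m, n)) (Z : 'M[R]_n) :
  B = B *m Z -> (\rank B <= \rank Z)%N.
Proof. by move=> h; rewrite {1}h; apply: mxrankM_maxr. Qed.

Theorem theorem1 (R : rcfType) (m n : nat) (X : 'M[R]_(m, n)) (lam : R)
  (f : 'M[R]_(m, n) -> R) (hlam : 0 < lam) :
  (forall A E : 'M[R]_(m, n), minP X lam f A E ->
     forall (U : 'M[R]_(m, \rank A)) (Sig : 'M[R]_(\rank A)) (V : 'M[R]_(n, \rank A)),
       @skinny_svd R m n A U Sig V ->
     forall Apinv : 'M[R]_(n, m), is_pinv A Apinv ->
     forall S : 'M[R]_(n, \rank A), V^T *m S = 0 ->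
       minQ X lam f (Apinv *m A + S *m V^T) E)
  /\
  (forall (Z : 'M[R]_n) (E : 'M[R]_(m, n)), minQ X lam f Z E ->
     minP X lam f (X - E) E).
Proof.
split.
  move=> A E [hX hmin] U Sig V [hA _ _ _ _] Ap [hp _ _ _] S hS.
  have hXE : X - E = A by rewrite hX addrK.
  split.
    have hAS : A *m S = U *m Sig *m V^T *m S := congr1 (mulmx^~ S) hA.
    rewrite -!mulmxA hS !mulmx0 in hAS.
    by rewrite hXE mulmxDr mulmxA hp mulmxA hAS mul0mx addr0.
  move=> Z' E' hf.
  have hr : (\rank (Ap *m A + S *m V^T)%R <= \rank A)%N.
    have -> : Ap *m A + S *m V^T = (Ap *m U *m Sig + S) *m V^T.
      have hAA : Ap *m A = Ap *m (U *m Sig *m V^T) := congr1 (mulmx Ap) hA.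
      by rewrite mulmxDl hAA !mulmxA.
    apply: leq_trans (mxrankM_maxr _ _) _; exact: rank_leq_row.
  have h1 : (\rank (Ap *m A + S *m V^T)%R)%:R + lam * f E <= (\rank A)%:R + lam * f E.
    by rewrite lerD2r ler_nat.
  have h2 := hmin (X - E') E' (esym (subrK E' X)).
  have h3 : (\rank (X - E'))%:R + lam * f E' <= (\rank Z')%:R + lam * f E'.
    by rewrite lerD2r ler_nat; exact: feas_rank hf.
  exact: le_trans h1 (le_trans h2 h3).
move=> Z E [hf hmin]; split; first by rewrite subrK.
move=> A' E' hX.
have [Z' [hZ' hr']] := @exists_proj R m n A'.
have hXE' : X - E' = A' by rewrite hX addrK.
have h1 : (\rank (X - E))%:R + lam * f E <= (\rank Z)%:R + lam * f E.
  by rewrite lerD2r ler_nat; exact: feas_rank hf.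
have h2 := hmin Z' E' (etrans hXE' (etrans (esym hZ') (congr1 (mulmx^~ Z') (esym hXE')))).
have h3 : (\rank Z')%:R + lam * f E' <= (\rank A')%:R + lam * f E'.
  by rewrite lerD2r ler_nat.
exact: le_trans h1 (le_trans h2 h3).
Qed.
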